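(* Let $K$ be a number field, let $\alpha>1$ be rational, and let $F\in K[[x^{\mathbb{R}}]]$ be a Hahn series satisfying $\sum_{i=0}^d P_i(x)F(x^{\alpha^i})=0$ for some polynomials $P_0,\dots,P_d\in K[x]$ with $P_d\ne0$. Then there is a positive integer $l$ such that $P(F(x^l))\subseteq\mathbb{Z}[\alpha,\alpha^{-1}]$; moreover $F(x^l)$ is again such an $\alpha$-Mahler Hahn series.
   Context: $K[[x^{\mathbb{R}}]]$ is the field of Hahn series $\sum_{i\in\mathbb{R}} f_ix^i$ ($f_i\in K$) with well-ordered support $P(F)=\{i:f_i\ne0\}$; $F(x^\gamma)=\sum_if_ix^{\gamma i}$. $\mathbb{Z}[\alpha,\alpha^{-1}]$ is the subring of $\mathbb{Q}$ generated by $\alpha^{\pm1}$. ''$\alpha$-Mahler'' means satisfying a nontrivial homogeneous equation $\sum_{i=0}^{d'} Q_i(x)G(x^{\alpha^i})=0$ with $Q_i\in K[x]$, $Q_{d'}\neq 0$. *)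

(* Defs.v *)
From HB Require Import structures.
From mathcomp Require Import all_boot all_order all_algebra all_field.
From mathcomp Require Import reals.
Set Implicit Arguments. Unset Strict Implicit. Unset Printing Implicit Defensive.
Import Order.TTheory GRing.Theory Num.Theory.
Local Open Scope ring_scope.

(* A (generalized) series sum_{e in R} f e x^e is represented by its
   coefficient function f : R -> K. *)

Definition is_hahn (R : realType) (K : ringType) (f : R -> K) : Prop :=
  forall S : R -> Prop,
    (forall e, S e -> f e != 0) -> (exists e, S e) ->
    exists m, S m /\ forall e, S e -> m <= e.

Definition hsupp (R : realType) (K : ringType) (f : R -> K) : R -> Prop :=
  fun e => f e != 0.

(* F(x^g) for g > 0: sum_i f_i x^{g i}, whose coefficient at e is f (e/g). *)
Definition hsubst (R : realType) (K : ringType) (f : R -> K) (g : R) : R -> K :=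
  fun e => f (e / g).

Definition hpolymul (R : realType) (K : ringType) (P : {poly K}) (f : R -> K)
  : R -> K :=
  fun e => \sum_(k < size P) P`_k * f (e - k%:R).

Definition mahler_eq (R : realType) (K : ringType) (alpha : rat) (f : R -> K)
  (d : nat) (P : 'I_d.+1 -> {poly K}) : Prop :=
  P ord_max != 0 /\
  forall e : R,
    \sum_(i < d.+1) hpolymul (P i) (hsubst f (ratr alpha ^+ i)) e = 0.

Definition is_mahler (R : realType) (K : ringType) (alpha : rat) (f : R -> K)
  : Prop :=
  exists d (P : 'I_d.+1 -> {poly K}), mahler_eq alpha f P.

Definition in_Zalpha (R : realType) (alpha : rat) (e : R) : Prop :=
  exists s : seq (int * int),
    e = ratr (\sum_(p <- s) p.1%:~R * alpha ^ p.2).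

(* Main.v *)
Require Import Defs.
From HB Require Import structures.
From mathcomp Require Import all_boot all_order all_algebra all_field.
From mathcomp Require Import reals.
From mathcomp Require Import ring lra.
From Stdlib Require Import Classical_Prop.
Import Order.TTheory GRing.Theory Num.Theory.
Local Open Scope ring_scope.
Set Implicit Arguments. Unset Strict Implicit. Unset Printing Implicit Defensive.

Definition Za (alpha x : rat) : Prop :=
  exists s : seq (int * int), x = \sum_(p <- s) p.1%:~R * alpha ^ p.2.

Lemma Za_int alpha (z : int) : Za alpha z%:~R.
Proof. by exists [:: (z, 0)]; rewrite big_seq1 /= expr0z mulr1. Qed.

Lemma Za_nat alpha (n : nat) : Za alpha n%:R.
Proof. by rewrite pmulrn; apply: Za_int. Qed.

Lemma Za_add alpha x y : Za alpha x -> Za alpha y -> Za alpha (x + y).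
Proof. by move=> [s ->] [t ->]; exists (s ++ t); rewrite big_cat. Qed.

Lemma Za_opp alpha x : Za alpha x -> Za alpha (- x).
Proof.
move=> [s ->]; exists (map (fun p => (- p.1, p.2)) s).
by rewrite big_map -sumrN; apply: eq_bigr => p _ /=; rewrite mulrNz mulNr.
Qed.

Lemma Za_mulX alpha x (z : int) : alpha != 0 -> Za alpha x -> Za alpha (x * alpha ^ z).
Proof.
move=> a0 [s ->]; exists (map (fun p => (p.1, p.2 + z)) s).
by rewrite big_map big_distrl; apply: eq_bigr => p _ /=; rewrite expfzDr // mulrA.
Qed.

Definition Lz (alpha : rat) (d : nat) : int :=
  \prod_(n < d) (numq alpha ^+ n.+1 - denq alpha ^+ n.+1).

Lemma num_gt_den (alpha : rat) : 1 < alpha -> denq alpha < numq alpha.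
Proof.
rewrite -{1}[alpha]divq_num_den ltr_pdivlMr ?ltr0z ?denq_gt0 //.
by rewrite mul1r ltr_int.
Qed.

Lemma Lz_gt0 (alpha : rat) d : 1 < alpha -> 0 < Lz alpha d.
Proof.
move=> ha; apply: prodr_gt0 => n _; rewrite subr_gt0 ltrXn2r //.
by apply: num_gt_den.
Qed.

Lemma RatL (alpha : rat) d n : 1 < alpha -> (0 < n <= d)%N ->
  exists z : int, (Lz alpha d)%:~R / (alpha ^+ n - 1) = z%:~R.
Proof.
move=> ha /andP [n0 nd].
have nd' : (n.-1 < d)%N by rewrite prednK.
set p := numq alpha; set q := denq alpha.
exists ((\prod_(j < d | j != Ordinal nd') (p ^+ j.+1 - q ^+ j.+1)) * q ^+ n).
rewrite /Lz (bigD1 (Ordinal nd')) //= prednK //.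
set M := \prod_(j < d | _) _.
have q0 : q%:~R != 0 :> rat by rewrite intr_eq0 gt_eqF // denq_gt0.
have pq : (p ^+ n - q ^+ n)%:~R != 0 :> rat.
  rewrite intr_eq0 gt_eqF // subr_gt0 ltrXn2r -?lt0n //.
    by rewrite ltW // denq_gt0.
  by apply: num_gt_den.
have ean : alpha ^+ n - 1 = (p ^+ n - q ^+ n)%:~R / q%:~R ^+ n.
  rewrite -[alpha]divq_num_den -/p -/q intrB !rmorphXn /=.
  by rewrite exprMn exprVn mulrBl mulfV ?expf_neq0.
rewrite ean invf_div [in LHS]intrM -/p -/q mulrC mulrA divfK //.
by rewrite intrM mulrC rmorphXn.
Qed.

Definition Gset (R : realType) (alpha : rat) (l : nat) (e : R) : Prop :=
  exists r : rat, e = ratr r /\ Za alpha (l%:R * r).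

Lemma G_addn (R : realType) alpha l (e : R) (k : nat) :
  Gset alpha l e -> Gset alpha l (e + k%:R).
Proof.
move=> [r [-> hr]]; exists (r + k%:R); split; first by rewrite rmorphD rmorph_nat.
by rewrite mulrDr -natrM; apply: Za_add => //; apply: Za_nat.
Qed.

Lemma G_subn (R : realType) alpha l (e : R) (k : nat) :
  Gset alpha l e -> Gset alpha l (e - k%:R).
Proof.
move=> [r [-> hr]]; exists (r - k%:R); split; first by rewrite rmorphB rmorph_nat.
by rewrite mulrBr -natrM; apply: Za_add => //; apply: Za_opp; apply: Za_nat.
Qed.

Lemma G_mulX (R : realType) (alpha : rat) l (e : R) (i : nat) : alpha != 0 ->
  Gset alpha l e -> Gset alpha l (e * ratr alpha ^+ i).
Proof.
move=> a0 [r [-> hr]]; exists (r * alpha ^+ i); split; first by rewrite rmorphM rmorphXn.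
by rewrite mulrA; exact: (Za_mulX (i%:Z) a0 hr).
Qed.

Lemma G_divX (R : realType) (alpha : rat) l (e : R) (i : nat) : alpha != 0 ->
  Gset alpha l e -> Gset alpha l (e / ratr alpha ^+ i).
Proof.
move=> a0 [r [-> hr]]; exists (r / alpha ^+ i); split.
  by rewrite fmorph_div rmorphXn.
by rewrite mulrA; have := Za_mulX (- (i%:Z)) a0 hr; rewrite -exprnN.
Qed.

Lemma ratr_gt1 (R : realType) (alpha : rat) : 1 < alpha -> 1 < (ratr alpha : R).
Proof. move=> ha; have : (ratr 1 : R) < ratr alpha by rewrite ltr_rat.
by rewrite rmorph1. Qed.

Lemma Gm (R : realType) (alpha : rat) (l d : nat) (m : R) (i j k k' : nat) :
  1 < alpha -> (l%:R : rat) = (Lz alpha d)%:~R -> (i < j)%N -> (j <= d)%N ->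
  k%:R + ratr alpha ^+ i * m = k'%:R + ratr alpha ^+ j * m -> Gset alpha l m.
Proof.
move=> ha hl ij jd heq.
have a0 : alpha != 0 by rewrite gt_eqF // (lt_trans ltr01 ha).
set a : R := ratr alpha.
have a1 : 1 < a by apply: ratr_gt1.
have aij : a ^+ i < a ^+ j by rewrite ltr_eXn2l.
have nz : a ^+ j - a ^+ i != 0 by rewrite subr_eq0 gt_eqF.
have h1 : k%:R - k'%:R = (a ^+ j - a ^+ i) * m.
  rewrite mulrBl; move: heq; set u := a ^+ i * m; set v := a ^+ j * m => heq.
  lra.
have hm : m = (k%:R - k'%:R) / (a ^+ j - a ^+ i) by rewrite h1 mulrC mulKf.
exists ((k%:R - k'%:R) / (alpha ^+ j - alpha ^+ i)); split.
  by rewrite hm fmorph_div !rmorphB !rmorph_nat !rmorphXn.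
have jd' : (0 < j - i <= d)%N.
  by rewrite subn_gt0 ij (leq_trans (leq_subr _ _) jd).
have [z hz] := RatL ha jd'.
have eji : alpha ^+ j - alpha ^+ i = alpha ^+ i * (alpha ^+ (j - i) - 1).
  by rewrite mulrBr mulr1 -exprD subnKC // ltnW.
exists [:: ((k%:Z - k'%:Z) * z, - (i%:Z))]; rewrite big_seq1 /= -exprnN.
rewrite eji -hl in hz *.
have Ai : alpha ^+ i != 0 by rewrite expf_neq0.
have X0 : alpha ^+ (j - i) - 1 != 0.
  rewrite subr_eq0 gt_eqF // exprn_egt1 // subn_eq0 -ltnNge //.
move: hz; set A := alpha ^+ i; set X := alpha ^+ (j - i) - 1 => hz.
rewrite intrM -hz intrB.
field.
by rewrite Ai X0.
Qed.

Lemma hpoly_widen (R : realType) (K : ringType) (p : {poly K}) (f : R -> K) e N :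
  (size p <= N)%N -> hpolymul p f e = \sum_(k < N) p`_k * f (e - k%:R).
Proof.
move=> hN; rewrite /hpolymul (big_ord_widen _ (fun k : nat => p`_k * f (e - k%:R)) hN).
rewrite big_mkcond /=; apply: eq_bigr => k _; case: ifP => // /negbT.
by rewrite -leqNgt => h; rewrite nth_default // mul0r.
Qed.

Lemma key (R : realType) (K : idomainType) (alpha : rat) (F : R -> K) d
  (P : 'I_d.+1 -> {poly K}) :
  1 < alpha -> is_hahn F -> mahler_eq alpha F P ->
  forall e, F e != 0 -> Gset alpha `|Lz alpha d|%N e.
Proof.
move=> ha hH [hPd heq] e0 Fe0.
set l := `|Lz alpha d|%N.
have hl : (l%:R : rat) = (Lz alpha d)%:~R.
  by rewrite pmulrn /l gez0_abs // ltW // Lz_gt0.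
have a0 : alpha != 0 by rewrite gt_eqF // (lt_trans ltr01 ha).
set a : R := ratr alpha.
have a1 : 1 < a by apply: ratr_gt1.
have anz i : a ^+ i != 0 by rewrite expf_neq0 // gt_eqF // (lt_trans ltr01 a1).
have apos i : 0 < a ^+ i by rewrite exprn_gt0 // (lt_trans ltr01 a1).
case: (classic (Gset alpha l e0)) => // nG0; exfalso.
have [m [[Fm nGm] minm]] := hH (fun e => F e != 0 /\ ~ Gset alpha l e)
   (fun e h => proj1 h) (ex_intro _ e0 (conj Fe0 nG0)).
set N := \max_(i < d.+1) size (P i).
have hsz i : (size (P i) <= N)%N.
  exact: (@leq_bigmax _ (fun i => size (P i)) i).
pose w (x : 'I_d.+1 * 'I_N) : R := (x.2 : nat)%:R + a ^+ x.1 * m.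
pose Q (x : 'I_d.+1 * 'I_N) := (P x.1)`_x.2 != 0.
have sz0 : (0 < size (P ord_max))%N by rewrite size_poly_gt0.
have x0lt : ((size (P ord_max)).-1 < N)%N by rewrite prednK ?hsz.
pose x0 : ('I_d.+1 * 'I_N)%type := (ord_max, Ordinal x0lt).
have Qx0 : Q x0 by rewrite /Q /= -lead_coefE lead_coef_eq0.
case: (arg_minP w Qx0) => xs Qxs minxs.
case: xs Qxs minxs => i0 k0 Qxs minxs.
set mu := w (i0, k0).
have E := heq mu.
rewrite (eq_bigr (fun i => \sum_(k < N) (P i)`_k * F ((mu - k%:R) / a ^+ i))) in E;
  last by move=> i _; rewrite (hpoly_widen _ _ (hsz i)).
rewrite pair_bigA /= in E.
have Z : \sum_(x | x != (i0, k0)) (P x.1)`_x.2 * F ((mu - (x.2 : nat)%:R) / a ^+ x.1) = 0.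
  apply: big1 => -[i k] nx /=.
  have [Qx|Qx] := eqVneq ((P i)`_k) 0; first by rewrite Qx mul0r.
  have Qx' : Q (i, k) by [].
  have := minxs _ Qx'; rewrite le_eqVlt => /orP [/eqP ew | lw].
    exfalso; rewrite /w /= in ew.
    case: (ltngtP i0 i) => hi.
    - by apply: nGm; apply: (Gm ha hl hi _ ew); rewrite -ltnS.
    - by apply: nGm; apply: (Gm ha hl hi _ (esym ew)); rewrite -ltnS.
    - have hi' : i0 = i by apply: val_inj.
      rewrite hi' in ew; move/addIr/eqP: ew; rewrite eqr_nat => /eqP hk.
      have hk' : k0 = k by apply: val_inj.
      by move: nx; rewrite hi' hk' eqxx.
  set t := (mu - k%:R) / a ^+ i.
  have tm : t < m.
    by rewrite /t ltr_pdivrMr // ltrBlDl [m * _]mulrC.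
  have [->|Ft] := eqVneq (F t) 0; first by rewrite mulr0.
  exfalso.
  have nGt : ~ Gset alpha l t.
    move=> Gt; apply: nGm.
    have := G_addn k (G_mulX i a0 Gt).
    rewrite /t divfK // subrK => Gmu.
    have := G_divX i0 a0 (G_subn k0 Gmu).
    by rewrite /mu /w /= [k0%:R + _]addrC addrK mulrC mulKf.
  by have := minm t (conj Ft nGt); rewrite leNgt tm.
rewrite (bigD1 (i0, k0)) //= Z addr0 in E.
have tm : (mu - k0%:R) / a ^+ i0 = m.
  by rewrite /mu /w /= [k0%:R + _]addrC addrK mulrC mulKf.
rewrite tm in E.
by move: E; apply/eqP; rewrite mulf_neq0.
Qed.

Lemma sum_div (V : zmodType) (n l : nat) (g : nat -> V) : (0 < l)%N ->
  \sum_(k < n * l) (if (l %| k)%N then g (k %/ l)%N else 0) = \sum_(j < n) g j.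
Proof.
move=> l0; elim: n => [|n IH]; first by rewrite mul0n !big_ord0.
rewrite big_ord_recr /= -IH mulSnr.
have mk q : \sum_(k < q) (if (l %| k)%N then g (k %/ l)%N else 0) =
   \sum_(0 <= k < q) (if (l %| k)%N then g (k %/ l)%N else 0) by rewrite big_mkord.
rewrite !mk.
rewrite (@big_cat_nat _ _ _ (n * l)) ?leq_addr //=; congr (_ + _).
rewrite -{1}[(n * l)%N]add0n big_addn addKn big_ltn // add0n dvdn_mull // mulnK //.
rewrite big1_seq ?addr0 // => k; rewrite mem_index_iota => /andP [_ /andP [k1 kl]].
rewrite dvdn_addl ?dvdn_mull //; case: ifP => // /(dvdn_leq k1).
by rewrite leqNgt kl.
Qed.

Theorem mainTheorem9 (R : realType) (K : fieldExtType rat) (alpha : rat)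
  (F : R -> K) (d : nat) (P : 'I_d.+1 -> {poly K}) :
  1 < alpha -> is_hahn F -> mahler_eq alpha F P ->
  exists l : nat, (0 < l)%N /\
    (forall e, hsupp (hsubst F l%:R) e -> in_Zalpha alpha e) /\
    is_hahn (hsubst F l%:R) /\ is_mahler alpha (hsubst F l%:R).
Proof.
move=> ha hH hM.
have hk := key ha hH hM.
set l := `|Lz alpha d|%N in hk *.
have l0 : (0 < l)%N by rewrite /l absz_gt0 gt_eqF // Lz_gt0.
have lR : (l%:R : R) != 0 by rewrite pnatr_eq0 -lt0n.
exists l; split => //; split; last split.
- move=> e; rewrite /hsupp /hsubst => /hk [r [hr [s hs]]].
  exists s; rewrite -hs.
  have -> : (ratr (l%:R * r) : R) = l%:R * ratr r by rewrite rmorphM rmorph_nat.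
  by rewrite -hr mulrC divfK.
- move=> S hS [e Se].
  have hS' : forall t, S (t * l%:R) -> F t != 0.
    by move=> t /hS; rewrite /hsubst mulfK.
  have Se' : S (e / l%:R * l%:R) by rewrite divfK.
  have [m' [Sm' hm']] := hH _ hS' (ex_intro _ _ Se').
  exists (m' * l%:R); split => // t St.
  have : S ((t / l%:R) * l%:R) by rewrite divfK.
  by move/hm' => h; rewrite -(divfK lR t) ler_pM2r ?ltr0n.
- case: hM => hPd heq.
  pose Q (i : 'I_d.+1) := \poly_(k < (size (P i) * l)%N) (if (l %| k)%N then (P i)`_(k %/ l)%N else 0).
  rewrite /is_mahler; exists d; exists Q; split.
  + set s := size (P ord_max).
    have s0 : (0 < s)%N by rewrite size_poly_gt0.
    apply/eqP => /(congr1 (fun p : {poly K} => p`_(s.-1 * l)%N)).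
    rewrite coef_poly coef0 ltn_pmul2r // ltn_predL s0 dvdn_mull // mulnK //.
    by rewrite -lead_coefE; apply/eqP; rewrite lead_coef_eq0.
  + move=> e; rewrite -[RHS](heq (e / l%:R)); apply: eq_bigr => i _.
    rewrite (hpoly_widen _ _ (size_poly _ _)) /hpolymul.
    rewrite -(@sum_div _ (size (P i)) l (fun j => (P i)`_j * hsubst F (ratr alpha ^+ i) (e / l%:R - j%:R)) l0).
    apply: eq_bigr => k _; rewrite coef_poly ltn_ord.
    case: ifP => hdv; last by rewrite mul0r.
    rewrite /hsubst; congr (_ * F _).
    rewrite -{1}(divnK hdv) natrM; set A := ratr alpha ^+ i.
    have A0 : A != 0 by rewrite expf_neq0 // gt_eqF // (lt_trans ltr01 (ratr_gt1 _ ha)).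
    by rewrite mulrAC mulrBl mulfK.

Qed.
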